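(* Let $F$ be real-analytic and $L$-periodic. For each $j=1,2,\dots$ there exists a number $b_j<\infty$, not depending on $N$ (it may depend on $j$, $F$ and $L$), such that for every $N\ge 2$ and every $i\in\{1,\dots,N\}$, $$|c_{ij}^{(N)}|<b_j\,N^{\frac{j-1}{2}}.$$
   Context: Fix $L>0$ and an $L$-periodic function $F:\mathbb R\to\mathbb R$ (an external force on the circle $S_L=\mathbb R/L\mathbb Z$). For an integer $N\ge2$ consider $N$ particles with lifted positions $x_1(t)<\dots<x_N(t)<x_1(t)+L$, extended periodically by $x_{i+N}(t)=x_i(t)+L$ (indices taken cyclically). They obey $$\frac{d^2x_i}{dt^2}=\frac{1}{(x_i-x_{i-1})^2}-\frac{1}{(x_{i+1}-x_i)^2}+F(x_i),\qquad i=1,\dots,N,$$ i.e. nearest-neighbour Coulomb repulsion with force $f(r)=r^{-2}$, with initial conditions $x_i(0)=(i-1)L/N$ (so all gaps equal $\Delta=L/N$) and $\dot x_i(0)=0$. Let $v_i=\dot x_i$. For analytic $F$ the solution is analytic near $t=0$ and $v_i(t)=\sum_{j\ge1}c_{ij}t^j$ with $c_{ij}=c_{ij}^{(N)}=v_i^{(j)}(0)/j!$. *)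

(* Defs.v *)
From Stdlib Require Import Reals Lra Lia Arith Factorial.
Open Scope R_scope.

Definition real_analytic (F : R -> R) : Prop :=
  forall x0 : R, exists r : R, 0 < r /\ exists a : nat -> R,
    forall x : R, Rabs (x - x0) < r -> Pser a (x - x0) (F x).

Definition periodic (L : R) (F : R -> R) : Prop := forall x : R, F (x + L) = F x.

(* Particles are indexed 0..N-1 (paper: 1..N).  D k i t is the k-th time
   derivative of the (lifted) position x_i at time t; D 0 i = x_i. *)

Definition left_gap (N : nat) (L : R) (x : nat -> R) (i : nat) : R :=
  match i with
  | O => x O - (x (N - 1)%nat - L)
  | S k => x i - x k
  end.

Definition right_gap (N : nat) (L : R) (x : nat -> R) (i : nat) : R :=
  if Nat.eqb (S i) N then (x O + L) - x i else x (S i) - x i.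

(* D is a smooth solution on (-eps, eps) of the Coulomb N-particle system with
   external force F on the circle of length L, started at equal spacing L/N
   with zero velocities. *)
Definition is_solution (N : nat) (L : R) (F : R -> R) (eps : R)
    (D : nat -> nat -> R -> R) : Prop :=
  0 < eps /\
  (forall (k i : nat) (t : R), (i < N)%nat -> -eps < t < eps ->
      derivable_pt_lim (D k i) t (D (S k) i t)) /\
  (forall (i : nat) (t : R), (i < N)%nat -> -eps < t < eps ->
      0 < right_gap N L (fun m => D O m t) i) /\
  (forall (i : nat) (t : R), (i < N)%nat -> -eps < t < eps ->
      D 2%nat i t =
        / (left_gap N L (fun m => D O m t) i) ^ 2
        - / (right_gap N L (fun m => D O m t) i) ^ 2
        + F (D O i t)) /\
  (forall i : nat, (i < N)%nat -> D O i 0 = INR i * L / INR N) /\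
  (forall i : nat, (i < N)%nat -> D 1%nat i 0 = 0).

(* c_{ij} = v_i^{(j)}(0)/j! = x_i^{(j+1)}(0)/j! *)
Definition coeff (D : nat -> nat -> R -> R) (i j : nat) : R :=
  D (S j) i 0 / INR (fact j).

(* Main.v *)
Require Import Defs.
From Stdlib Require Import Reals Lra Lia Arith FunctionalExtensionality ZArith IndefiniteDescription.
From Coquelicot Require Import Coquelicot.
Open Scope R_scope.

Fixpoint bn (n k : nat) : R :=
  match n, k with
  | _, O => 1
  | O, S _ => 0
  | S n', S k' => bn n' k' + bn n' (S k')
  end.

Lemma bn_big : forall n k, (n < k)%nat -> bn n k = 0.
Proof.
  induction n; intros k H; destruct k; simpl; try lia; auto.
  rewrite !IHn; try lia. lra.
Qed.

Lemma bn_ge0 : forall n k, 0 <= bn n k.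
Proof. induction n; destruct k; simpl; try lra.
  pose proof (IHn k). pose proof (IHn (S k)). lra. Qed.

Lemma sum_ext : forall f g n, (forall i, (i <= n)%nat -> f i = g i) ->
  sum_f_R0 f n = sum_f_R0 g n.
Proof. intros. apply sum_eq. auto. Qed.

Lemma leib_step : forall (A B : nat -> R) k,
  sum_f_R0 (fun s => bn (S k) s * A s * B (S k - s)%nat) (S k) =
  sum_f_R0 (fun s => bn k s * (A (S s) * B (k - s)%nat + A s * B (S k - s)%nat)) k.
Proof.
  intros A B k.
  rewrite decomp_sum by lia. simpl pred.
  replace (sum_f_R0 (fun i => bn (S k) (S i) * A (S i) * B (S k - S i)%nat) k)
    with (sum_f_R0 (fun i => bn k i * A (S i) * B (k - i)%nat) k +
          sum_f_R0 (fun i => bn k (S i) * A (S i) * B (k - i)%nat) k).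
  2:{ rewrite <- sum_plus. apply sum_ext. intros i _. simpl. ring. }
  assert (H: bn (S k) 0 * A 0%nat * B (S k - 0)%nat +
     sum_f_R0 (fun i => bn k (S i) * A (S i) * B (k - i)%nat) k =
     sum_f_R0 (fun s => bn k s * A s * B (S k - s)%nat) k).
  { destruct k.
    - simpl. ring.
    - rewrite (decomp_sum (fun s => bn (S k) s * A s * B (S (S k) - s)%nat)) by lia.
      simpl pred. rewrite tech5.
      rewrite (bn_big (S k) (S (S k))) by lia.
      simpl (bn (S (S k)) 0). simpl (bn (S k) 0).
      replace (sum_f_R0 (fun i : nat => bn (S k) (S i) * A (S i) * B (S k - i)%nat) k)
        with (sum_f_R0 (fun i : nat => bn (S k) (S i) * A (S i) * B (S (S k) - S i)%nat) k).
      2:{ apply sum_ext. intros. f_equal. }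
      ring. }
  transitivity (sum_f_R0 (fun i => bn k i * A (S i) * B (k - i)%nat) k +
    sum_f_R0 (fun s => bn k s * A s * B (S k - s)%nat) k).
  { rewrite <- H. ring. }
  rewrite <- sum_plus. apply sum_ext. intros. ring.
Qed.
Definition inI (e t : R) := - e < t < e.

Lemma locI : forall e t (P : R -> Prop), inI e t -> (forall y, inI e y -> P y) -> locally t P.
Proof.
  intros e t P Ht HP.
  assert (Hpos : 0 < Rmin (t + e) (e - t)) by (unfold inI in Ht; apply Rmin_pos; lra).
  exists (mkposreal _ Hpos). intros y Hy. apply HP.
  change (Rabs (y - t) < Rmin (t + e) (e - t)) in Hy.
  apply Rabs_def2 in Hy. destruct Hy as [H1 H2].
  pose proof (Rmin_l (t+e) (e-t)). pose proof (Rmin_r (t+e) (e-t)).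
  unfold inI in *. lra.
Qed.

Lemma dpl_extI : forall e f g t l, (forall y, inI e y -> f y = g y) -> inI e t ->
  derivable_pt_lim f t l -> derivable_pt_lim g t l.
Proof.
  intros. apply is_derive_Reals. apply is_derive_Reals in H1.
  apply (is_derive_ext_loc f g); auto. apply (locI e); auto.
Qed.

Lemma Derive_n_extI : forall e f g k t, (forall y, inI e y -> f y = g y) -> inI e t ->
  Derive_n f k t = Derive_n g k t.
Proof.
  intros. apply Derive_n_ext_loc. apply (locI e); auto.
Qed.

Definition dchain (e : R) (n : nat) (U : nat -> R -> R) :=
  forall k t, (k < n)%nat -> inI e t -> derivable_pt_lim (U k) t (U (S k) t).

Definition prodc (U V : nat -> R -> R) (k : nat) (t : R) : R :=
  sum_f_R0 (fun s => bn k s * U s t * V (k - s)%nat t) k.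

Lemma deriv_sum : forall (f f' : nat -> R -> R) n t,
  (forall s, (s <= n)%nat -> derivable_pt_lim (f s) t (f' s t)) ->
  derivable_pt_lim (fun x => sum_f_R0 (fun s => f s x) n) t (sum_f_R0 (fun s => f' s t) n).
Proof.
  intros f f' n t H. induction n.
  - simpl. apply H. lia.
  - simpl. apply (derivable_pt_lim_plus (fun x => sum_f_R0 (fun s => f s x) n) (f (S n))).
    + apply IHn. intros; apply H; lia.
    + apply H; lia.
Qed.

Lemma dchain_prod : forall e n U V, dchain e n U -> dchain e n V -> dchain e n (prodc U V).
Proof.
  intros e n U V HU HV k t Hk Ht. unfold prodc.
  rewrite (leib_step (fun s => U s t) (fun s => V s t)).
  apply (deriv_sum (fun s x => bn k s * U s x * V (k - s)%nat x)
     (fun s x => bn k s * (U (S s) x * V (k - s)%nat x + U s x * V (S k - s)%nat x))).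
  intros s Hs.
  replace (bn k s * (U (S s) t * V (k - s)%nat t + U s t * V (S k - s)%nat t))
    with (0 * (U s t * V (k - s)%nat t) + bn k s * (U (S s) t * V (k - s)%nat t + U s t * V (S (k - s))%nat t)).
  2:{ replace (S k - s)%nat with (S (k - s)) by lia. ring. }
  replace (fun x => bn k s * U s x * V (k - s)%nat x) with
    (mult_real_fct (bn k s) (fun x => U s x * V (k - s)%nat x)).
  2:{ unfold mult_real_fct. apply functional_extensionality. intros; ring. }
  replace (0 * (U s t * V (k - s)%nat t) + bn k s * (U (S s) t * V (k - s)%nat t + U s t * V (S (k - s)) t))
   with (bn k s * (U (S s) t * V (k - s)%nat t + U s t * V (S (k - s)) t)) by ring.
  apply derivable_pt_lim_scal.
  apply (derivable_pt_lim_mult (U s) (V (k - s)%nat)).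
  - apply HU; auto; lia.
  - apply HV; auto; lia.
Qed.
Definition Cn (e : R) (n : nat) (f : R -> R) :=
  exists U : nat -> R -> R, (forall t, U O t = f t) /\ dchain e n U.

Lemma Cn_0 : forall e f, Cn e 0 f.
Proof. intros. exists (fun _ => f). split; auto. intros k t Hk; lia. Qed.

Lemma Cn_S : forall e n f f', (forall t, inI e t -> derivable_pt_lim f t (f' t)) ->
  Cn e n f' -> Cn e (S n) f.
Proof.
  intros e n f f' Hd [V [HV0 HV]].
  exists (fun k => match k with O => f | S k' => V k' end). split; auto.
  intros k t Hk Ht. destruct k.
  - rewrite HV0. auto.
  - apply HV; auto; lia.
Qed.

Lemma Cn_pred : forall e n f, Cn e (S n) f -> Cn e n f.
Proof. intros e n f [U [H0 H]]. exists U; split; auto. intros k t Hk Ht. apply H; auto; lia. Qed.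

Lemma Cn_le : forall e n m f, (m <= n)%nat -> Cn e n f -> Cn e m f.
Proof. intros e n m f Hmn. induction Hmn; auto. intros. apply IHHmn. apply Cn_pred; auto. Qed.

Lemma Cn_deriv : forall e n f, Cn e (S n) f ->
  exists f', (forall t, inI e t -> derivable_pt_lim f t (f' t)) /\ Cn e n f'.
Proof.
  intros e n f [U [H0 H]]. exists (U 1%nat). split.
  - intros t Ht. apply (dpl_extI e (U 0%nat)); auto. apply H; auto; lia.
  - exists (fun k => U (S k)). split; auto. intros k t Hk Ht. apply H; auto; lia.
Qed.

Lemma Cn_mult : forall e n f g, Cn e n f -> Cn e n g -> Cn e n (fun t => f t * g t).
Proof.
  intros e n f g [U [HU0 HU]] [V [HV0 HV]]. exists (prodc U V). split.
  - intros t. unfold prodc. simpl. rewrite HU0, HV0. ring.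
  - apply dchain_prod; auto.
Qed.

Lemma Cn_plus : forall e n f g, Cn e n f -> Cn e n g -> Cn e n (fun t => f t + g t).
Proof.
  intros e n f g [U [HU0 HU]] [V [HV0 HV]]. exists (fun k t => U k t + V k t). split.
  - intros t. rewrite HU0, HV0. auto.
  - intros k t Hk Ht. apply (derivable_pt_lim_plus (U k) (V k)); auto.
Qed.

Lemma Cn_scal : forall e n c f, Cn e n f -> Cn e n (fun t => c * f t).
Proof.
  intros e n c f [U [HU0 HU]]. exists (fun k t => c * U k t). split.
  - intros t. rewrite HU0. auto.
  - intros k t Hk Ht. apply (derivable_pt_lim_scal (U k)); auto.
Qed.

Lemma Cn_const : forall e n c, Cn e n (fun _ => c).
Proof.
  intros. exists (fun k t => match k with O => c | _ => 0 end). split; auto.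
  intros k t Hk Ht. destruct k; apply derivable_pt_lim_const.
Qed.

Lemma Cn_ext : forall e n f g, (forall t, f t = g t) -> Cn e n f -> Cn e n g.
Proof. intros e n f g H [U [H0 H1]]. exists U. split; auto. intros; rewrite H0; auto. Qed.

Lemma Cn_inv : forall e n f, (forall t, inI e t -> f t <> 0) -> Cn e n f ->
  Cn e n (fun t => / f t).
Proof.
  intros e n. induction n; intros f Hnz Hf. apply Cn_0.
  destruct (Cn_deriv _ _ _ Hf) as [f' [Hd Hf']].
  apply (Cn_S e n _ (fun t => -1 * (f' t * (/ f t * / f t)))).
  - intros t Ht. replace (-1 * (f' t * (/ f t * / f t))) with (- f' t / (f t)^2).
    2:{ field. apply Hnz; auto. }
    replace (fun t0 => / f t0) with (div_fct (fct_cte 1) f).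
    2:{ apply functional_extensionality. intros; unfold div_fct, fct_cte, Rdiv; ring. }
    replace (- f' t / f t ^ 2) with ((0 * f t - f' t * fct_cte 1 t) / Rsqr (f t)).
    2:{ unfold fct_cte, Rsqr. field. apply Hnz; auto. }
    apply derivable_pt_lim_div; [apply derivable_pt_lim_const | apply Hd; auto | apply Hnz; auto].
  - apply Cn_scal. apply Cn_mult; auto. apply Cn_mult; apply IHn; auto; apply Cn_pred; auto.
Qed.

Lemma Cn_comp : forall e n (H : nat -> R -> R) g,
  (forall q x, derivable_pt_lim (H q) x (H (S q) x)) ->
  Cn e n g -> forall q, Cn e n (fun t => H q (g t)).
Proof.
  intros e n H. induction n; intros g HH Hg q. apply Cn_0.
  destruct (Cn_deriv _ _ _ Hg) as [g' [Hd Hg']].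
  apply (Cn_S e n _ (fun t => H (S q) (g t) * g' t)).
  - intros t Ht. apply (derivable_pt_lim_comp g (H q)); auto.
  - apply Cn_mult; auto. apply IHn; auto. apply Cn_pred; auto.
Qed.

Definition Cinf e f := forall n, Cn e n f.

Lemma Derive_n_chain : forall e n U f, (forall t, U O t = f t) -> dchain e n U ->
  forall k t, (k <= n)%nat -> inI e t -> Derive_n f k t = U k t.
Proof.
  intros e n U f H0 H. induction k; intros t Hk Ht.
  - simpl. auto.
  - simpl. transitivity (Derive (U k) t).
    + apply Derive_ext_loc. apply (locI e); auto. intros. apply IHk; auto; lia.
    + apply is_derive_unique. apply is_derive_Reals. apply H; auto.
Qed.

Lemma Cinf_dchain : forall e f, Cinf e f -> forall n, dchain e n (Derive_n f).
Proof.
  intros e f Hf n k t Hk Ht.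
  destruct (Hf (S k)) as [U [H0 H]].
  rewrite (Derive_n_chain e (S k) U f H0 H (S k)); auto.
  apply (dpl_extI e (U k)).
  - intros. symmetry. apply (Derive_n_chain e (S k) U f); auto.
  - auto.
  - apply H; auto.
Qed.

Lemma Cinf_Cn : forall e f, Cinf e f -> forall n, Cn e n f.
Proof. auto. Qed.

Lemma Derive_n_plusI : forall e f g k t, Cinf e f -> Cinf e g -> inI e t ->
  Derive_n (fun y => f y + g y) k t = Derive_n f k t + Derive_n g k t.
Proof.
  intros. apply (Derive_n_chain e (S k) (fun k y => Derive_n f k y + Derive_n g k y)); auto.
  intros k' y Hk Hy. apply (derivable_pt_lim_plus (Derive_n f k') (Derive_n g k'));
  [apply (Cinf_dchain e f H (S k)) | apply (Cinf_dchain e g H0 (S k))]; auto.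
Qed.

Lemma Derive_n_scalI : forall e c f k t, Cinf e f -> inI e t ->
  Derive_n (fun y => c * f y) k t = c * Derive_n f k t.
Proof.
  intros. apply (Derive_n_chain e (S k) (fun k y => c * Derive_n f k y)); auto.
  intros k' y Hk Hy. apply (derivable_pt_lim_scal (Derive_n f k'));
  apply (Cinf_dchain e f H (S k)); auto.
Qed.

Lemma Derive_n_multI : forall e f g k t, Cinf e f -> Cinf e g -> inI e t ->
  Derive_n (fun y => f y * g y) k t =
  sum_f_R0 (fun s => bn k s * Derive_n f s t * Derive_n g (k - s)%nat t) k.
Proof.
  intros. apply (Derive_n_chain e (S k) (prodc (Derive_n f) (Derive_n g))); auto.
  - intros. unfold prodc. simpl. ring.
  - apply dchain_prod; apply Cinf_dchain; auto.
Qed.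

Lemma Cinf_mult : forall e f g, Cinf e f -> Cinf e g -> Cinf e (fun t => f t * g t).
Proof. intros e f g Hf Hg n. apply Cn_mult; auto. Qed.
Lemma Cinf_plus : forall e f g, Cinf e f -> Cinf e g -> Cinf e (fun t => f t + g t).
Proof. intros e f g Hf Hg n. apply Cn_plus; auto. Qed.
Lemma Cinf_scal : forall e c f, Cinf e f -> Cinf e (fun t => c * f t).
Proof. intros e c f Hf n. apply Cn_scal; auto. Qed.
Lemma Cinf_const : forall e c, Cinf e (fun _ => c).
Proof. intros e c n. apply Cn_const. Qed.
Lemma Cinf_inv : forall e f, (forall t, inI e t -> f t <> 0) -> Cinf e f -> Cinf e (fun t => / f t).
Proof. intros e f H Hf n. apply Cn_inv; auto. Qed.
Lemma Cinf_comp : forall e (H : nat -> R -> R) g,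
  (forall q x, derivable_pt_lim (H q) x (H (S q) x)) -> Cinf e g -> forall q, Cinf e (fun t => H q (g t)).
Proof. intros e H g HH Hg q n. apply Cn_comp; auto. Qed.
Lemma Cinf_ext : forall e f g, (forall t, f t = g t) -> Cinf e f -> Cinf e g.
Proof. intros e f g H Hf n. apply (Cn_ext e n f); auto. Qed.
Lemma Cinf_of_chain : forall e U, (forall n, dchain e n U) -> Cinf e (U O).
Proof. intros e U H n. exists U. split; auto. Qed.
Definition dl (a : nat -> R) (i : nat) : R := a (S i) - a i.

Fixpoint bnd (nr : R) (P : nat) (a : nat -> R) (B : R) : Prop :=
  match P with
  | O => forall i, Rabs (a i) <= B
  | S P' => (forall i, Rabs (a i) <= B) /\ bnd nr P' (dl a) (B / nr)
  end.

Lemma bnd_abs : forall nr P a B, bnd nr P a B -> forall i, Rabs (a i) <= B.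
Proof. intros nr P a B H. destruct P; simpl in H; tauto. Qed.

Lemma bnd_ge0 : forall nr P a B, bnd nr P a B -> 0 <= B.
Proof. intros. pose proof (bnd_abs _ _ _ _ H 0%nat). pose proof (Rabs_pos (a 0%nat)). lra. Qed.

Lemma bnd_ext : forall nr P a b B, (forall i, a i = b i) -> bnd nr P a B -> bnd nr P b B.
Proof.
  intros nr P. induction P; intros a b B Hab H; simpl in *.
  - intros i; rewrite <- Hab; auto.
  - destruct H as [H1 H2]. split. intros i; rewrite <- Hab; auto.
    apply (IHP (dl a)); auto. intros i; unfold dl; rewrite !Hab; auto.
Qed.

Lemma bnd_mono : forall nr P a B B', 0 < nr -> B <= B' -> bnd nr P a B -> bnd nr P a B'.
Proof.
  intros nr P. induction P; intros a B B' Hn HB H; simpl in *.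
  - intros i; specialize (H i); lra.
  - destruct H as [H1 H2]. split. intros i; specialize (H1 i); lra.
    apply (IHP _ (B / nr)); auto. unfold Rdiv. apply Rmult_le_compat_r; auto.
    left; apply Rinv_0_lt_compat; auto.
Qed.

Lemma bnd_plus : forall nr P a b A B, bnd nr P a A -> bnd nr P b B ->
  bnd nr P (fun i => a i + b i) (A + B).
Proof.
  intros nr P. induction P; intros a b A B Ha Hb; simpl in *.
  - intros i. eapply Rle_trans. apply Rabs_triang. specialize (Ha i); specialize (Hb i); lra.
  - destruct Ha as [Ha1 Ha2], Hb as [Hb1 Hb2]. split.
    + intros i. eapply Rle_trans. apply Rabs_triang. specialize (Ha1 i); specialize (Hb1 i); lra.
    + replace ((A + B) / nr) with (A / nr + B / nr) by (unfold Rdiv; ring).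
      apply (bnd_ext _ _ (fun i => dl a i + dl b i)). intros; unfold dl; ring.
      apply IHP; auto.
Qed.

Lemma bnd_scal : forall nr P a A c, bnd nr P a A -> bnd nr P (fun i => c * a i) (Rabs c * A).
Proof.
  intros nr P. induction P; intros a A c Ha; simpl in *.
  - intros i. rewrite Rabs_mult. apply Rmult_le_compat_l. apply Rabs_pos. auto.
  - destruct Ha as [Ha1 Ha2]. split.
    + intros i. rewrite Rabs_mult. apply Rmult_le_compat_l. apply Rabs_pos. auto.
    + replace (Rabs c * A / nr) with (Rabs c * (A / nr)) by (unfold Rdiv; ring).
      apply (bnd_ext _ _ (fun i => c * dl a i)). intros; unfold dl; ring.
      apply IHP; auto.
Qed.

Lemma bnd_shift : forall nr P a A c, bnd nr P a A -> bnd nr P (fun i => a (i + c)%nat) A.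
Proof.
  intros nr P. induction P; intros a A c Ha; simpl in *.
  - intros i; auto.
  - destruct Ha as [Ha1 Ha2]. split. intros; auto.
    apply (bnd_ext _ _ (fun i => dl a (i + c)%nat)). intros; unfold dl; simpl; auto.
    apply IHP; auto.
Qed.

Lemma bnd_S : forall nr P a A, bnd nr (S P) a A -> bnd nr P a A.
Proof.
  intros nr P. induction P; intros a A Ha; simpl in *.
  - tauto.
  - destruct Ha as [Ha1 Ha2]. split; auto.
Qed.

Lemma bnd_le : forall nr P Q a A, (P <= Q)%nat -> bnd nr Q a A -> bnd nr P a A.
Proof. intros nr P Q a A H. induction H; auto. intros; apply IHle, bnd_S; auto. Qed.

Lemma bnd_dl : forall nr P a A, bnd nr (S P) a A -> bnd nr P (dl a) (A / nr).
Proof. intros. simpl in H. tauto. Qed.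


Lemma bnd_zero : forall nr P B, 0 < nr -> 0 <= B -> bnd nr P (fun _ => 0) B.
Proof.
  intros nr P. induction P; intros B Hn HB; simpl.
  - intros; rewrite Rabs_R0; auto.
  - split. intros; rewrite Rabs_R0; auto.
    apply (bnd_ext _ _ (fun _ => 0)). intros; unfold dl; ring.
    apply IHP; auto. unfold Rdiv. apply Rmult_le_pos; auto. left; apply Rinv_0_lt_compat; auto.
Qed.

Lemma bnd_const : forall nr P c, 0 < nr -> bnd nr P (fun _ => c) (Rabs c).
Proof.
  intros nr P c Hn. destruct P; simpl.
  - intros; lra.
  - split. intros; lra.
    apply (bnd_ext _ _ (fun _ => 0)). intros; unfold dl; ring.
    apply bnd_zero; auto. unfold Rdiv. apply Rmult_le_pos. apply Rabs_pos. left; apply Rinv_0_lt_compat; auto.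
Qed.

Lemma bnd_mult : forall nr P a b A B, 0 < nr -> bnd nr P a A -> bnd nr P b B ->
  bnd nr P (fun i => a i * b i) (2 ^ P * A * B).
Proof.
  intros nr P. induction P; intros a b A B Hn Ha Hb.
  - simpl in *. intros i. rewrite Rabs_mult.
    replace (1 * A * B) with (A * B) by ring.
    apply Rmult_le_compat; auto using Rabs_pos.
  - pose proof (bnd_ge0 _ _ _ _ Ha) as HA. pose proof (bnd_ge0 _ _ _ _ Hb) as HB.
    split.
    + intros i. rewrite Rabs_mult.
      apply Rle_trans with (A * B).
      apply Rmult_le_compat; auto using Rabs_pos; try (eapply bnd_abs; eauto).
      assert (1 <= 2 ^ S P) by (apply pow_R1_Rle; lra).
      apply Rle_trans with (1 * (A * B)). lra.
      rewrite Rmult_assoc. apply Rmult_le_compat_r; auto. apply Rmult_le_pos; auto.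
    + apply (bnd_ext _ _ (fun i => dl a i * b (i + 1)%nat + a i * dl b i)).
      { intros i. unfold dl. replace (i + 1)%nat with (S i) by lia. ring. }
      replace (2 ^ S P * A * B / nr) with (2 ^ P * (A / nr) * B + 2 ^ P * A * (B / nr)).
      2:{ simpl. field. lra. }
      apply bnd_plus.
      * apply IHP; auto. apply bnd_dl; auto. apply bnd_shift. apply bnd_S; auto.
      * apply IHP; auto. apply bnd_S; auto. apply bnd_dl; auto.
Qed.

Lemma bnd_sum : forall nr P (f : nat -> nat -> R) (B : nat -> R) n,
  (forall s, (s <= n)%nat -> bnd nr P (f s) (B s)) ->
  bnd nr P (fun i => sum_f_R0 (fun s => f s i) n) (sum_f_R0 B n).
Proof.
  intros nr P f B n. induction n; intros H.
  - simpl. apply H; lia.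
  - simpl. apply (bnd_plus _ _ (fun i => sum_f_R0 (fun s => f s i) n) (f (S n))).
    apply IHn; intros; apply H; lia. apply H; lia.
Qed.
Lemma sum_ge_first : forall (f : nat -> R) n, (forall i, 0 <= f i) -> f O <= sum_f_R0 f n.
Proof.
  intros f n H. induction n; simpl. lra. pose proof (H (S n)). lra.
Qed.

Lemma sum_nonneg : forall (f : nat -> R) n, (forall i, 0 <= f i) -> 0 <= sum_f_R0 f n.
Proof. intros. eapply Rle_trans. apply (H 0%nat). apply sum_ge_first; auto. Qed.

Lemma bnd_grid : forall P (G : nat -> R -> R) (M : nat -> R) nr Lc,
  0 < nr -> 0 <= Lc ->
  (forall q x, derivable_pt_lim (G q) x (G (S q) x)) ->
  (forall q x, Rabs (G q x) <= M q) ->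
  bnd nr P (fun i => G O (INR i * (Lc / nr))) (sum_f_R0 (fun p => Lc ^ p * M p) P).
Proof.
  induction P; intros G M nr Lc Hn HL HG HM.
  - simpl. intros i. rewrite Rmult_1_l. auto.
  - assert (HM0 : forall q, 0 <= M q).
    { intros q. eapply Rle_trans. apply Rabs_pos. apply (HM q 0). }
    assert (Hh : 0 <= Lc / nr). { unfold Rdiv. apply Rmult_le_pos; auto. left; apply Rinv_0_lt_compat; auto. }
    split.
    + intros i. eapply Rle_trans. apply HM.
      apply Rle_trans with (Lc ^ 0 * M 0%nat). simpl; lra.
      apply (sum_ge_first (fun p => Lc ^ p * M p)). intros. apply Rmult_le_pos; auto. apply pow_le; auto.
    + set (h := Lc / nr).
      apply (bnd_ext _ _ (fun i => (fun q x => G q (x + h) - G q x) O (INR i * h))).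
      { intros i. unfold dl. rewrite S_INR. simpl. f_equal. f_equal. ring. }
      apply (bnd_mono _ _ _ (sum_f_R0 (fun p => Lc ^ p * (h * M (S p))) P)); auto.
      * rewrite (decomp_sum _ (S P)) by lia. simpl pred.
        unfold Rdiv. rewrite Rmult_plus_distr_r.
        assert (0 <= Lc ^ 0 * M 0%nat * / nr).
        { pose proof (HM0 0%nat). simpl. apply Rmult_le_pos. lra. left; apply Rinv_0_lt_compat; auto. }
        assert (sum_f_R0 (fun p => Lc ^ p * (h * M (S p))) P =
                / nr * sum_f_R0 (fun i => Lc ^ S i * M (S i)) P).
        { rewrite scal_sum. apply sum_ext. intros. unfold h. simpl. unfold Rdiv. ring. }
        lra.
      * apply (IHP (fun q x => G q (x + h) - G q x) (fun p => h * M (S p)) nr Lc); auto.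
        { intros q x. apply (derivable_pt_lim_minus (fun x0 => G q (x0 + h)) (G q)); auto.
          replace (G (S q) (x + h)) with (G (S q) (x + h) * 1) by ring.
          apply (derivable_pt_lim_comp (fun x0 => x0 + h) (G q)).
          - replace 1 with (1 + 0) by ring. apply derivable_pt_lim_plus.
            apply derivable_pt_lim_id. apply derivable_pt_lim_const.
          - apply HG. }
        { intros q x. destruct (MVT_abs (G q) (G (S q)) x (x + h)) as [c [Hc _]].
          intros; apply HG.
          rewrite Hc. replace (x + h - x) with h by ring. rewrite (Rabs_pos_eq h) by auto.
          rewrite Rmult_comm. apply Rmult_le_compat_l; auto. }
Qed.

Lemma periodic_deriv : forall (f f' : R -> R) L, (forall x, f (x + L) = f x) ->
  (forall x, derivable_pt_lim f x (f' x)) -> forall x, f' (x + L) = f' x.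
Proof.
  intros f f' L Hp Hd x.
  assert (H1 : derivable_pt_lim (fun y => f (y + L)) x (f' (x + L) * 1)).
  { apply (derivable_pt_lim_comp (fun y => y + L) f).
    - replace 1 with (1 + 0) by ring. apply derivable_pt_lim_plus.
      apply derivable_pt_lim_id. apply derivable_pt_lim_const.
    - apply Hd. }
  assert (H2 : derivable_pt_lim f x (f' (x + L))).
  { replace (fun y => f (y + L)) with f in H1. rewrite Rmult_1_r in H1; auto.
    apply functional_extensionality; intros; rewrite Hp; auto. }
  eapply uniqueness_limite; eauto.
Qed.

Lemma periodic_nat : forall (f : R -> R) L, (forall x, f (x + L) = f x) ->
  forall n x, f (x + INR n * L) = f x /\ f (x - INR n * L) = f x.
Proof.
  intros f L Hp n. induction n; intros x.
  - simpl. split; f_equal; ring.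
  - rewrite S_INR. destruct (IHn x) as [H1 H2]. split.
    + replace (x + (INR n + 1) * L) with ((x + INR n * L) + L) by ring. rewrite Hp; auto.
    + set (y := x - (INR n + 1) * L).
      replace x with ((y + INR n * L) + L) by (unfold y; ring). rewrite Hp.
      destruct (IHn y) as [H3 _]. rewrite H3; auto.
Qed.

Lemma periodic_bounded : forall (f : R -> R) L, 0 < L -> (forall x, f (x + L) = f x) ->
  (forall x, continuity_pt f x) -> exists M, forall x, Rabs (f x) <= M.
Proof.
  intros f L HL Hp Hc.
  destruct (continuity_ab_maj (fun x => Rabs (f x)) 0 L) as [Mx [HM _]].
  lra. intros c _. apply (continuity_pt_comp f Rabs); auto. apply Rcontinuity_abs.
  exists (Rabs (f Mx)). intros x.
  destruct (archimed (x / L)) as [Hu1 Hu2].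
  set (k := (up (x / L) - 1)%Z).
  assert (Hk : IZR k * L <= x < IZR k * L + L).
  { unfold k. rewrite minus_IZR. split.
    - apply Rmult_le_reg_r with (/ L). apply Rinv_0_lt_compat; auto.
      replace ((IZR (up (x / L)) - 1) * L * / L) with (IZR (up (x / L)) - 1) by (field; lra).
      unfold Rdiv in Hu2. lra.
    - apply Rmult_lt_reg_r with (/ L). apply Rinv_0_lt_compat; auto.
      replace (((IZR (up (x / L)) - 1) * L + L) * / L) with (IZR (up (x / L))) by (field; lra).
      unfold Rdiv in Hu1. lra. }
  set (y := x - IZR k * L).
  assert (Hfy : f x = f y).
  { unfold y. destruct (ZArith_dec.Z_le_gt_dec 0%Z k) as [Hz | Hz].
    - rewrite <- (Z2Nat.id k Hz). rewrite <- INR_IZR_INZ.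
      destruct (periodic_nat f L Hp (Z.to_nat k) (x - INR (Z.to_nat k) * L)) as [H1 _].
      rewrite <- H1. f_equal. ring.
    - assert (Hz' : (0 <= - k)%Z) by lia.
      replace (IZR k) with (- IZR (- k)) by (rewrite opp_IZR; ring).
      rewrite <- (Z2Nat.id (- k) Hz'). rewrite <- INR_IZR_INZ.
      destruct (periodic_nat f L Hp (Z.to_nat (- k)) x) as [H2 _].
      replace (x - - INR (Z.to_nat (- k)) * L) with (x + INR (Z.to_nat (- k)) * L) by ring.
      rewrite H2; auto. }
  rewrite Hfy. apply HM. unfold y. lra.
Qed.
Lemma analytic_CV : forall (a : nat -> R) (r : R) (F : R -> R) x0, 0 < r ->
  (forall x, Rabs (x - x0) < r -> Pser a (x - x0) (F x)) ->
  forall z, Rabs z < r -> Rbar_lt (Rabs z) (CV_radius a).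
Proof.
  intros a r F x0 Hr Ha z Hz.
  set (rho := (Rabs z + r) / 2).
  assert (Hrho : 0 <= rho /\ Rabs z < rho /\ rho < r).
  { pose proof (Rabs_pos z). unfold rho. lra. }
  assert (HP : Pser a rho (F (x0 + rho))).
  { replace rho with (x0 + rho - x0) at 1 by ring. apply Ha.
    replace (x0 + rho - x0) with rho by ring. rewrite Rabs_pos_eq; lra. }
  unfold Pser in HP. apply is_series_Reals in HP.
  assert (Hl : is_lim_seq (fun n => a n * rho ^ n) 0).
  { apply ex_series_lim_0. eexists; eauto. }
  destruct (filterlim_bounded (fun n => a n * rho ^ n)) as [M HM].
  { exists 0. apply Hl. }
  assert (Hle : Rbar_le rho (CV_radius a)).
  { destruct (CV_radius_bounded a) as [Hub _]. apply Hub. exists M. intros n. apply (HM n). }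
  apply Rbar_lt_le_trans with rho; auto. simpl. lra.
Qed.

Lemma analytic_chain : forall F, real_analytic F ->
  forall q x, derivable_pt_lim (Derive_n F q) x (Derive_n F (S q) x).
Proof.
  intros F Han q x.
  apply is_derive_Reals. simpl. apply Derive_correct.
  destruct (Han x) as [r [Hr [a Ha]]].
  pose proof (analytic_CV a r F x Hr Ha) as HCV.
  set (G := fun y => PSeries a (y + - x)).
  assert (HFG : forall y, Rabs (y - x) < r -> F y = G y).
  { intros y Hy. unfold G. symmetry. apply is_pseries_unique. apply is_pseries_Reals.
    apply Ha; auto. }
  apply (ex_derive_ext_loc (fun y => PSeries (PS_derive_n q a) (y + - x))).
  - assert (Hr2 : 0 < r / 2) by lra.
    exists (mkposreal _ Hr2). intros y Hy. change (Rabs (y - x) < r / 2) in Hy.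
    transitivity (Derive_n G q y).
    + unfold G. rewrite Derive_n_comp_trans. rewrite Derive_n_PSeries; auto.
      apply HCV. change (Rabs (y - x) < r). lra.
    + symmetry. apply Derive_n_ext_loc. exists (mkposreal _ Hr2). intros t Ht.
      change (Rabs (t - y) < r / 2) in Ht. apply HFG.
      replace (t - x) with ((t - y) + (y - x)) by ring.
      eapply Rle_lt_trans. apply Rabs_triang. lra.
  - apply (ex_derive_comp (PSeries (PS_derive_n q a)) (fun y => y + - x)).
    + apply ex_derive_PSeries. rewrite CV_radius_derive_n.
      replace (x + - x) with 0 by ring. apply HCV. rewrite Rabs_R0; auto.
    + auto_derive; auto.
Qed.
Definition Tbv (n c : R) (a : nat) : R :=
  match a with O => c | _ => sqrt n ^ a * c / n end.

Lemma Tbv_ge0 : forall n c a, 1 <= n -> 0 <= c -> 0 <= Tbv n c a.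
Proof.
  intros n c a Hn Hc. destruct a; simpl; auto.
  unfold Rdiv. apply Rmult_le_pos. apply Rmult_le_pos; auto.
  apply Rmult_le_pos. apply sqrt_pos. apply pow_le, sqrt_pos.
  left; apply Rinv_0_lt_compat; lra.
Qed.

Lemma Tbv_mono : forall n c c' a, 1 <= n -> c <= c' -> Tbv n c a <= Tbv n c' a.
Proof.
  intros n c c' a Hn Hc. destruct a; simpl; auto.
  unfold Rdiv. apply Rmult_le_compat_r. left; apply Rinv_0_lt_compat; lra.
  apply Rmult_le_compat_l; auto. apply Rmult_le_pos. apply sqrt_pos. apply pow_le, sqrt_pos.
Qed.

Lemma Tbv_mult : forall n c1 c2 a b, 1 <= n -> 0 <= c1 -> 0 <= c2 ->
  Tbv n c1 a * Tbv n c2 b <= Tbv n (c1 * c2) (a + b).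
Proof.
  intros n c1 c2 a b Hn H1 H2.
  assert (Hs : 0 <= sqrt n) by apply sqrt_pos.
  destruct a as [|a]; destruct b as [|b]; simpl Tbv.
  - lra.
  - simpl plus. unfold Tbv. right. field. lra.
  - rewrite Nat.add_0_r. unfold Tbv. right. field. lra.
  - rewrite pow_add. simpl pow.
    assert (0 <= sqrt n ^ a) by (apply pow_le; auto).
    assert (0 <= sqrt n ^ b) by (apply pow_le; auto).
    set (X := sqrt n * (sqrt n ^ a * (sqrt n * sqrt n ^ b)) * (c1 * c2)).
    assert (0 <= X) by (unfold X; repeat apply Rmult_le_pos; auto).
    apply Rle_trans with (X / n * / n). right; unfold X; field; lra.
    apply Rle_trans with (X / n * 1). 2: right; unfold X; field; lra.
    apply Rmult_le_compat_l.
    + unfold Rdiv. repeat apply Rmult_le_pos; auto. left; apply Rinv_0_lt_compat; lra.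
    + rewrite <- Rinv_1. apply Rinv_le_contravar; lra.
Qed.

Lemma sum_bn : forall m, sum_f_R0 (bn m) m = 2 ^ m.
Proof.
  induction m. simpl. auto.
  pose proof (leib_step (fun _ => 1) (fun _ => 1) m) as H.
  cbv beta in H.
  replace (sum_f_R0 (bn (S m)) (S m)) with
   (sum_f_R0 (fun s : nat => bn (S m) s * 1 * 1) (S m)) by (apply sum_ext; intros; ring).
  rewrite H.
  replace (sum_f_R0 (fun s : nat => bn m s * (1 * 1 + 1 * 1)) m) with
    (2 * sum_f_R0 (bn m) m). rewrite IHm. simpl; ring.
  rewrite scal_sum. apply sum_ext. intros; ring.
Qed.
Lemma leib_bnd : forall n P m (u v : nat -> nat -> R) K c1 c2,
  1 <= n -> 0 <= c1 -> 0 <= c2 -> 0 <= K ->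
  (forall a, (a <= m)%nat -> bnd n P (u a) (K * Tbv n c1 a)) ->
  (forall b, (b <= m)%nat -> bnd n P (v b) (K * Tbv n c2 b)) ->
  bnd n P (fun i => sum_f_R0 (fun a => bn m a * u a i * v (m - a)%nat i) m)
    (2 ^ m * 2 ^ P * K * K * Tbv n (c1 * c2) m).
Proof.
  intros n P m u v K c1 c2 Hn H1 H2 HK Hu Hv.
  apply (bnd_mono _ _ _ (sum_f_R0 (fun a => Rabs (bn m a) * (2 ^ P * (K * Tbv n c1 a) * (K * Tbv n c2 (m - a)%nat))) m)).
  lra.
  - replace (2 ^ m * 2 ^ P * K * K * Tbv n (c1 * c2) m) with
      (sum_f_R0 (fun a => bn m a * (2 ^ P * (K * K) * Tbv n (c1 * c2) m)) m).
    2:{ rewrite <- (scal_sum (bn m) m (2 ^ P * (K * K) * Tbv n (c1 * c2) m)). rewrite (sum_bn m). ring. }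
    apply sum_Rle. intros a Ha. rewrite Rabs_pos_eq by apply bn_ge0.
    pose proof (Tbv_mult n c1 c2 a (m - a)%nat Hn H1 H2) as HT.
    replace (a + (m - a))%nat with m in HT by lia.
    pose proof (bn_ge0 m a).
    assert (0 <= 2 ^ P) by (apply pow_le; lra).
    apply Rle_trans with (bn m a * (2 ^ P * (K * K) * (Tbv n c1 a * Tbv n c2 (m - a)))).
    right; ring.
    apply Rmult_le_compat_l; auto. apply Rmult_le_compat_l; auto.
    apply Rmult_le_pos; auto. apply Rmult_le_pos; auto.
  - apply (bnd_sum n P (fun a i => bn m a * u a i * v (m - a)%nat i)).
    intros a Ha.
    apply (bnd_ext _ _ (fun i => bn m a * (u a i * v (m - a)%nat i))). intros; ring.
    apply bnd_scal. apply bnd_mult. lra.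
    apply Hu; auto. apply Hv; lia.
Qed.

Lemma fin_choice : forall (Q : nat -> R -> Prop) m,
  (forall a K K', K <= K' -> Q a K -> Q a K') ->
  (forall a, (a <= m)%nat -> exists K, 0 <= K /\ Q a K) ->
  exists K, 0 <= K /\ forall a, (a <= m)%nat -> Q a K.
Proof.
  intros Q m Hmono. induction m; intros H.
  - destruct (H 0%nat (le_n 0)) as [K [HK HQ]]. exists K. split; auto.
    intros a Ha. replace a with 0%nat by lia. auto.
  - destruct IHm as [K1 [HK1 HQ1]]. intros; apply H; lia.
    destruct (H (S m) (le_n _)) as [K2 [HK2 HQ2]].
    exists (K1 + K2). split. lra. intros a Ha.
    destruct (Nat.eq_dec a (S m)). subst. apply (Hmono _ K2); auto; lra.
    apply (Hmono _ K1); auto. lra. apply HQ1. lia.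
Qed.
Lemma mod_S : forall N i, N <> 0%nat ->
  S i mod N = if Nat.eqb (S (i mod N)) N then 0%nat else S (i mod N).
Proof.
  intros N i HN. pose proof (Nat.div_mod_eq i N). pose proof (Nat.mod_upper_bound i N HN).
  destruct (Nat.eqb_spec (S (i mod N)) N) as [E|E].
  - symmetry. apply (Nat.mod_unique _ _ (S (i / N))). lia. lia.
  - symmetry. apply (Nat.mod_unique _ _ (i / N)). lia. lia.
Qed.

Lemma mod_addN : forall N i, N <> 0%nat -> (i + N) mod N = i mod N.
Proof.
  intros N i HN. pose proof (Nat.div_mod_eq i N). pose proof (Nat.mod_upper_bound i N HN).
  symmetry. apply (Nat.mod_unique _ _ (S (i / N))). lia. lia.
Qed.

Lemma mod_pred : forall N i, N <> 0%nat ->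
  (i + N - 1) mod N = if Nat.eqb (i mod N) 0 then (N - 1)%nat else (i mod N - 1)%nat.
Proof.
  intros N i HN. pose proof (Nat.div_mod_eq i N). pose proof (Nat.mod_upper_bound i N HN).
  destruct (Nat.eqb_spec (i mod N) 0) as [E|E].
  - symmetry. apply (Nat.mod_unique _ _ (i / N)). lia. lia.
  - symmetry. apply (Nat.mod_unique _ _ (S (i / N))). lia. lia.
Qed.

Lemma mod_small : forall N i, (i < N)%nat -> i mod N = i.
Proof. intros. symmetry. apply (Nat.mod_unique _ _ 0). lia. lia. Qed.

Section Main.
Variable L : R.
Variable F : R -> R.
Hypothesis HL : 0 < L.
Hypothesis Hper : periodic L F.
Hypothesis Han : real_analytic F.

Definition Fd (q : nat) := Derive_n F q.

Lemma Fd_chain : forall q x, derivable_pt_lim (Fd q) x (Fd (S q) x).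
Proof. intros. apply analytic_chain; auto. Qed.

Lemma Fd_per : forall q x, Fd q (x + L) = Fd q x.
Proof.
  induction q; intros x. apply Hper.
  apply (periodic_deriv (Fd q) (Fd (S q)) L); auto. apply Fd_chain.
Qed.

Lemma Fd_bnd : forall q, exists M, forall x, Rabs (Fd q x) <= M.
Proof.
  intros q. apply periodic_bounded with L; auto. apply Fd_per.
  intros x. apply derivable_continuous_pt. exists (Fd (S q) x). apply Fd_chain.
Qed.

Definition Mf (q : nat) : R := proj1_sig (constructive_indefinite_description _ (Fd_bnd q)).

Lemma Mf_spec : forall q x, Rabs (Fd q x) <= Mf q.
Proof. intros. unfold Mf. destruct (constructive_indefinite_description _ (Fd_bnd q)); simpl; auto. Qed.

Lemma Mf_ge0 : forall q, 0 <= Mf q.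
Proof. intros. eapply Rle_trans. apply Rabs_pos. apply (Mf_spec q 0). Qed.

Definition xs (N : nat) (D : nat -> nat -> R -> R) (m i : nat) : R := D m (i mod N) 0.
Definition rfun N (D : nat -> nat -> R -> R) (i : nat) (t : R) : R :=
  D 0%nat (S i mod N) t + (-1 * D 0%nat (i mod N) t) + (if Nat.eqb (S (i mod N)) N then L else 0).
Definition r_ N D (m i : nat) : R := Derive_n (rfun N D i) m 0.
Definition qf N D i t := rfun N D i t * rfun N D i t.
Definition qq N D (m i : nat) : R := Derive_n (qf N D i) m 0.
Definition Wf N D i t := / qf N D i t.
Definition w_ N D (m i : nat) : R := Derive_n (Wf N D i) m 0.
Definition Phf N (D : nat -> nat -> R -> R) q i t := Fd q (D 0%nat (i mod N) t).
Definition ph N D (q m i : nat) : R := Derive_n (Phf N D q i) m 0.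

Lemma rfun_per : forall N D i, N <> 0%nat -> rfun N D (i + N) = rfun N D i.
Proof.
  intros. unfold rfun. change (S (i + N)) with (S i + N)%nat.
  rewrite !mod_addN; auto.
Qed.

Section Sol.
Variables (N : nat) (eps : R) (D : nat -> nat -> R -> R).
Hypothesis HN : (2 <= N)%nat.
Hypothesis Hs : is_solution N L F eps D.

Lemma HN0 : N <> 0%nat. Proof. lia. Qed.
Lemma Heps : 0 < eps. Proof. destruct Hs; auto. Qed.
Lemma I0 : inI eps 0. Proof. pose proof Heps. unfold inI; lra. Qed.
Lemma nr_pos : 0 < INR N. Proof. apply lt_0_INR. lia. Qed.

Lemma D_chain : forall j n, (j < N)%nat -> dchain eps n (fun k => D k j).
Proof. intros j n Hj k t Hk Ht. destruct Hs as [_ [Hd _]]. apply Hd; auto. Qed.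

Lemma D1_chain : forall j n, (j < N)%nat -> dchain eps n (fun k => D (S k) j).
Proof. intros j n Hj k t Hk Ht. destruct Hs as [_ [Hd _]]. apply Hd; auto. Qed.

Lemma D0_Cinf : forall j, (j < N)%nat -> Cinf eps (D 0%nat j).
Proof. intros. apply (Cinf_of_chain eps (fun k => D k j)). intros; apply D_chain; auto. Qed.

Lemma D1_Cinf : forall j, (j < N)%nat -> Cinf eps (D 1%nat j).
Proof. intros. apply (Cinf_of_chain eps (fun k => D (S k) j)). intros; apply D1_chain; auto. Qed.

Lemma D_Derive : forall j k t, (j < N)%nat -> inI eps t -> Derive_n (D 0%nat j) k t = D k j t.
Proof.
  intros. apply (Derive_n_chain eps k (fun k => D k j)); auto. apply D_chain; auto.
Qed.

Lemma D1_Derive : forall j k t, (j < N)%nat -> inI eps t -> Derive_n (D 1%nat j) k t = D (S k) j t.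
Proof.
  intros. apply (Derive_n_chain eps k (fun k => D (S k) j)); auto. apply D1_chain; auto.
Qed.

Lemma modlt : forall i, (i mod N < N)%nat.
Proof. intros. apply Nat.mod_upper_bound. apply HN0. Qed.

Lemma rfun_Cinf : forall i, Cinf eps (rfun N D i).
Proof.
  intros i. unfold rfun.
  apply (Cinf_plus eps (fun t => D 0%nat (S i mod N) t + -1 * D 0%nat (i mod N) t)
    (fun _ => if Nat.eqb (S (i mod N)) N then L else 0)).
  - apply (Cinf_plus eps (D 0%nat (S i mod N)) (fun t => -1 * D 0%nat (i mod N) t)).
    apply D0_Cinf, modlt. apply Cinf_scal. apply D0_Cinf, modlt.
  - apply Cinf_const.
Qed.

Lemma r_pos : forall i, (1 <= i)%nat -> forall j, r_ N D j = r_ N D j.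
Proof. auto. Qed.

Lemma r_S : forall m i, r_ N D (S m) i = xs N D (S m) (S i) - xs N D (S m) i.
Proof.
  intros m i. unfold r_, rfun, xs.
  rewrite (Derive_n_plusI eps (fun t => D 0%nat (S i mod N) t + -1 * D 0%nat (i mod N) t)
    (fun _ => if Nat.eqb (S (i mod N)) N then L else 0)).
  rewrite (Derive_n_plusI eps (D 0%nat (S i mod N)) (fun t => -1 * D 0%nat (i mod N) t)).
  rewrite Derive_n_scalI with (e := eps). rewrite Derive_n_const.
  rewrite !D_Derive; try apply modlt; try apply I0. ring.
  all: try apply I0; try apply D0_Cinf; try apply modlt.
  - apply Cinf_scal, D0_Cinf, modlt.
  - apply (Cinf_plus eps (D 0%nat (S i mod N)) (fun t => -1 * D 0%nat (i mod N) t)).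
    apply D0_Cinf, modlt. apply Cinf_scal. apply D0_Cinf, modlt.
  - apply Cinf_const.
Qed.

Lemma D_init : forall j, (j < N)%nat -> D 0%nat j 0 = INR j * L / INR N.
Proof. intros. destruct Hs as [_ [_ [_ [_ [H0 _]]]]]. auto. Qed.

Lemma r_0 : forall i, r_ N D 0 i = L / INR N.
Proof.
  intros i. unfold r_. simpl. unfold rfun.
  pose proof nr_pos.
  rewrite !D_init; try apply modlt.
  rewrite (mod_S N i HN0).
  destruct (Nat.eqb_spec (S (i mod N)) N) as [E|E].
  - replace (INR (i mod N)) with (INR N - 1).
    2:{ apply (f_equal INR) in E. rewrite S_INR in E. lra. }
    simpl. field. lra.
  - rewrite S_INR. field. lra.
Qed.

Lemma rfun_gap : forall i t, rfun N D i t = right_gap N L (fun m => D 0%nat m t) (i mod N).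
Proof.
  intros i t. unfold rfun, right_gap. rewrite (mod_S N i HN0).
  destruct (Nat.eqb (S (i mod N)) N); ring.
Qed.

Lemma rfun_lgap : forall i t, rfun N D (i + N - 1) t = left_gap N L (fun m => D 0%nat m t) (i mod N).
Proof.
  intros i t. unfold rfun, left_gap.
  replace (S (i + N - 1)) with (i + N)%nat by (pose proof HN; lia).
  rewrite (mod_addN N i HN0). rewrite (mod_pred N i HN0).
  pose proof (modlt i).
  destruct (Nat.eqb_spec (i mod N) 0) as [E|E].
  - rewrite E. replace (S (N - 1)) with N by (pose proof HN; lia). rewrite Nat.eqb_refl. ring.
  - replace (S (i mod N - 1)) with (i mod N) by lia.
    destruct (Nat.eqb_spec (i mod N) N). lia.
    destruct (i mod N) as [|k] eqn:Ek. lia.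
    replace (S k - 1)%nat with k by lia. ring.
Qed.

Lemma rfun_pos : forall i t, inI eps t -> 0 < rfun N D i t.
Proof.
  intros i t Ht. rewrite rfun_gap. destruct Hs as [_ [_ [Hp _]]]. apply Hp; auto. apply modlt.
Qed.

Lemma qf_Cinf : forall i, Cinf eps (qf N D i).
Proof. intros. unfold qf. apply (Cinf_mult eps (rfun N D i) (rfun N D i)); apply rfun_Cinf. Qed.

Lemma Wf_Cinf : forall i, Cinf eps (Wf N D i).
Proof.
  intros. unfold Wf. apply (Cinf_inv eps (qf N D i)).
  intros t Ht. unfold qf. pose proof (rfun_pos i t Ht). nra.
  apply qf_Cinf.
Qed.

Lemma Phf_Cinf : forall q i, Cinf eps (Phf N D q i).
Proof.
  intros. unfold Phf. apply (Cinf_comp eps Fd (D 0%nat (i mod N))).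
  apply Fd_chain. apply D0_Cinf, modlt.
Qed.

Lemma x_eq : forall m i,
  xs N D (S (S m)) i = w_ N D m (i + N - 1) + -1 * w_ N D m i + ph N D 0 m i.
Proof.
  intros m i. unfold xs, w_, ph.
  pose proof (modlt i) as Hj. pose proof I0 as H0.
  rewrite <- D_Derive; auto.
  replace (S (S m)) with (m + 2)%nat by lia. rewrite <- Derive_n_comp.
  rewrite (Derive_n_extI eps (Derive_n (D 0%nat (i mod N)) 2) (D 2%nat (i mod N))); auto.
  2:{ intros; apply D_Derive; auto. }
  rewrite (Derive_n_extI eps (D 2%nat (i mod N))
    (fun t => (fun t => Wf N D (i + N - 1) t + -1 * Wf N D i t) t + Phf N D 0 i t)); auto.
  2:{ intros y Hy. destruct Hs as [_ [_ [_ [Heq _]]]]. rewrite Heq; auto.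
      unfold Wf, qf, Phf. rewrite rfun_lgap, rfun_gap. unfold Fd. simpl. rewrite !Rmult_1_r. ring. }
  rewrite Derive_n_plusI with (e := eps); auto.
  rewrite Derive_n_plusI with (e := eps); auto.
  rewrite Derive_n_scalI with (e := eps); auto.
  - apply Wf_Cinf.
  - apply Wf_Cinf.
  - apply Cinf_scal, Wf_Cinf.
  - apply (Cinf_plus eps (Wf N D (i + N - 1)) (fun t => -1 * Wf N D i t)).
    apply Wf_Cinf. apply Cinf_scal, Wf_Cinf.
  - apply Phf_Cinf.
Qed.

Lemma ph_S : forall q a i,
  ph N D q (S a) i = sum_f_R0 (fun s => bn a s * ph N D (S q) s i * xs N D (S (a - s)) i) a.
Proof.
  intros q a i. unfold ph, xs.
  pose proof (modlt i) as Hj. pose proof I0 as H0.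
  replace (S a) with (a + 1)%nat by lia. rewrite <- Derive_n_comp.
  rewrite (Derive_n_extI eps (Derive_n (Phf N D q i) 1)
    (fun t => Phf N D (S q) i t * D 1%nat (i mod N) t)); auto.
  2:{ intros y Hy. simpl. apply is_derive_unique. apply is_derive_Reals.
      unfold Phf. apply (derivable_pt_lim_comp (D 0%nat (i mod N)) (Fd q)).
      - destruct Hs as [_ [Hd _]]. apply Hd; auto.
      - apply Fd_chain. }
  rewrite Derive_n_multI with (e := eps); auto.
  - apply sum_ext. intros s Hs'. rewrite D1_Derive; auto.
  - apply Phf_Cinf.
  - apply D1_Cinf; auto.
Qed.

Lemma ph_0 : forall q i, ph N D q 0 i = Fd q (INR i * (L / INR N)).
Proof.
  intros q i. unfold ph, Phf. simpl. rewrite D_init by apply modlt.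
  pose proof (Nat.div_mod_eq i N) as E. pose proof nr_pos.
  replace (INR i * (L / INR N)) with (INR (i mod N) * L / INR N + INR (i / N) * L).
  2:{ rewrite E at 3. rewrite plus_INR, mult_INR. field. lra. }
  destruct (periodic_nat (Fd q) L (Fd_per q) (i / N) (INR (i mod N) * L / INR N)) as [H1 _].
  rewrite H1. auto.
Qed.

Lemma x_1 : forall i, xs N D 1 i = 0.
Proof. intros. unfold xs. destruct Hs as [_ [_ [_ [_ [_ H1]]]]]. apply H1, modlt. Qed.

Lemma qq_leib : forall m i,
  qq N D m i = sum_f_R0 (fun a => bn m a * r_ N D a i * r_ N D (m - a) i) m.
Proof.
  intros. unfold qq, qf, r_. apply Derive_n_multI with (e := eps); auto using rfun_Cinf, I0.
Qed.

Lemma w_rel : forall m i, (1 <= m)%nat ->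
  sum_f_R0 (fun a => bn m a * qq N D a i * w_ N D (m - a) i) m = 0.
Proof.
  intros m i Hm. unfold qq, w_.
  rewrite <- (Derive_n_multI eps (qf N D i) (Wf N D i)); auto using qf_Cinf, Wf_Cinf, I0.
  rewrite (Derive_n_extI eps _ (fun _ => 1)); auto using I0.
  - destruct m. lia. apply Derive_n_const.
  - intros y Hy. unfold Wf. field. unfold qf. pose proof (rfun_pos i y Hy). nra.
Qed.

Lemma qq_0 : forall i, qq N D 0 i = (L / INR N) * (L / INR N).
Proof. intros. unfold qq, qf. simpl. pose proof (r_0 i) as H. unfold r_ in H. simpl in H. rewrite H. auto. Qed.

Lemma w_0 : forall i, w_ N D 0 i = / ((L / INR N) * (L / INR N)).
Proof. intros. unfold w_, Wf, qf. simpl. pose proof (r_0 i) as H. unfold r_ in H. simpl in H. rewrite H. auto. Qed.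

End Sol.

Lemma w_per : forall N D m i, N <> 0%nat -> w_ N D m (i + N) = w_ N D m i.
Proof. intros. unfold w_, Wf, qf. rewrite rfun_per; auto. Qed.
Definition UB (P : nat) (Sq : nat -> (nat -> nat -> R -> R) -> nat -> R) (E : R -> R) : Prop :=
  exists K, 0 <= K /\ forall N eps D, (2 <= N)%nat -> is_solution N L F eps D ->
    bnd (INR N) P (Sq N D) (K * E (INR N)).

Lemma INR_ge1' : forall N, (2 <= N)%nat -> 1 <= INR N.
Proof. intros. assert (1 <= N)%nat by lia. apply le_INR in H0. simpl in H0. lra. Qed.

Lemma U_choice : forall P m (Sq : nat -> nat -> (nat -> nat -> R -> R) -> nat -> R) (c : R -> R),
  (forall n, 1 <= n -> 0 <= c n) ->
  (forall a, (a <= m)%nat -> UB P (Sq a) (fun n => Tbv n (c n) a)) ->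
  exists K, 0 <= K /\ forall N eps D, (2 <= N)%nat -> is_solution N L F eps D ->
    forall a, (a <= m)%nat -> bnd (INR N) P (Sq a N D) (K * Tbv (INR N) (c (INR N)) a).
Proof.
  intros P m Sq c Hc H.
  destruct (fin_choice (fun a K => forall N eps D, (2 <= N)%nat -> is_solution N L F eps D ->
    bnd (INR N) P (Sq a N D) (K * Tbv (INR N) (c (INR N)) a)) m) as [K [HK HQ]].
  - intros a K K' HKK' HQ N eps D HN Hs. apply (bnd_mono _ _ _ (K * Tbv (INR N) (c (INR N)) a)).
    apply lt_0_INR; lia.
    apply Rmult_le_compat_r; auto. apply Tbv_ge0. apply INR_ge1'; auto. apply Hc, INR_ge1'; auto.
    apply (HQ N eps D); auto.
  - intros a Ha. destruct (H a Ha) as [K [HK HB]]. exists K. split; auto.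
  - exists K. split; auto. intros N eps D HN Hs a Ha. apply (HQ a Ha N eps D); auto.
Qed.

Definition ALLX (M : nat) := forall P m, (1 <= m <= M)%nat ->
  UB P (fun N D => xs N D m) (fun n => Tbv n 1 m).

Lemma R_bound : forall M, ALLX M -> forall P a, (a <= M)%nat ->
  UB P (fun N D => r_ N D a) (fun n => Tbv n (/ n) a).
Proof.
  intros M HX P a Ha. destruct a.
  - exists L. split. lra. intros N eps D HN Hs.
    assert (0 < INR N) by (apply lt_0_INR; lia).
    apply (bnd_ext _ _ (fun _ => L / INR N)). intros; rewrite (r_0 N eps D HN Hs); auto.
    simpl Tbv. replace (L * / INR N) with (Rabs (L / INR N)).
    apply bnd_const; auto. rewrite Rabs_pos_eq. auto. unfold Rdiv. apply Rmult_le_pos; try lra.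
    left; apply Rinv_0_lt_compat; auto.
  - destruct (HX (S P) (S a)) as [K [HK HB]]. lia. exists K. split; auto.
    intros N eps D HN Hs. specialize (HB N eps D HN Hs).
    assert (0 < INR N) by (apply lt_0_INR; lia).
    apply bnd_dl in HB.
    apply (bnd_ext _ _ (dl (xs N D (S a)))).
    { intros; unfold dl; rewrite (r_S N eps D HN Hs); auto. }
    apply (bnd_mono _ _ _ (K * Tbv (INR N) 1 (S a) / INR N)); auto.
    right. unfold Tbv. field. lra.
Qed.

Lemma Q_bound : forall M, ALLX M -> forall P m, (m <= M)%nat ->
  UB P (fun N D => qq N D m) (fun n => Tbv n (/ n * / n) m).
Proof.
  intros M HX P m Hm.
  destruct (U_choice P m (fun a N D => r_ N D a) (fun n => / n)) as [K [HK HB]].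
  { intros n Hn. left; apply Rinv_0_lt_compat; lra. }
  { intros a Ha. apply (R_bound M); auto; lia. }
  exists (2 ^ m * 2 ^ P * K * K). split.
  { repeat apply Rmult_le_pos; auto; apply pow_le; lra. }
  intros N eps D HN Hs.
  assert (1 <= INR N) by (apply INR_ge1'; auto).
  apply (bnd_ext _ _ (fun i => sum_f_R0 (fun a => bn m a * r_ N D a i * r_ N D (m - a) i) m)).
  { intros; rewrite (qq_leib N eps D HN Hs); auto. }
  apply (leib_bnd (INR N) P m (fun a => r_ N D a) (fun a => r_ N D a) K (/ INR N) (/ INR N)); auto.
  left; apply Rinv_0_lt_compat; lra. left; apply Rinv_0_lt_compat; lra.
  all: intros a Ha; apply (HB N eps D HN Hs a Ha).
Qed.

Lemma W_bound : forall M, ALLX M -> forall P m, (m <= M)%nat ->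
  UB P (fun N D => w_ N D m) (fun n => Tbv n (n * n) m).
Proof.
  intros M HX P m. induction m as [m IH] using lt_wf_ind. intros Hm.
  destruct m as [|m'].
  - exists (/ (L * L)). split. left; apply Rinv_0_lt_compat; nra.
    intros N eps D HN Hs. assert (0 < INR N) by (apply lt_0_INR; lia).
    apply (bnd_ext _ _ (fun _ => / ((L / INR N) * (L / INR N)))).
    { intros; rewrite (w_0 N eps D HN Hs); auto. }
    simpl Tbv. replace (/ (L * L) * (INR N * INR N)) with (Rabs (/ (L / INR N * (L / INR N)))).
    apply bnd_const; auto.
    rewrite Rabs_pos_eq. field. split; lra.
    left. apply Rinv_0_lt_compat. assert (0 < L / INR N) by (unfold Rdiv; apply Rmult_lt_0_compat; auto; apply Rinv_0_lt_compat; auto). nra.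
  - set (m := S m').
    destruct (U_choice P m (fun a N D => qq N D a) (fun n => / n * / n)) as [K1 [HK1 HB1]].
    { intros n Hn. assert (0 < / n) by (apply Rinv_0_lt_compat; lra). nra. }
    { intros a Ha. apply (Q_bound M); auto; lia. }
    destruct (U_choice P m (fun b N D i => if Nat.ltb b m then w_ N D b i else 0) (fun n => n * n))
      as [K2 [HK2 HB2]].
    { intros n Hn. nra. }
    { intros b Hb. destruct (Nat.ltb_spec b m) as [Hlt|Hge].
      - destruct (IH b Hlt) as [K [HK HB]]. lia. exists K. split; auto.
      - exists 0. split. lra. intros N eps D HN Hs. apply bnd_zero. apply lt_0_INR; lia.
        rewrite Rmult_0_l; lra. }
    set (K := K1 + K2).
    exists (2 ^ m * 2 ^ P * K * K / (L * L)). split.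
    { unfold Rdiv. apply Rmult_le_pos. repeat apply Rmult_le_pos; unfold K; try lra; apply pow_le; lra.
      left; apply Rinv_0_lt_compat; nra. }
    intros N eps D HN Hs.
    assert (Hn1 : 1 <= INR N) by (apply INR_ge1'; auto).
    set (n := INR N) in *.
    assert (HS : bnd n P (fun i => sum_f_R0 (fun a => bn m a * qq N D a i *
       (fun b i => if Nat.ltb b m then w_ N D b i else 0) (m - a)%nat i) m)
       (2 ^ m * 2 ^ P * K * K * Tbv n (/ n * / n * (n * n)) m)).
    { apply (leib_bnd n P m (fun a => qq N D a) (fun b i => if Nat.ltb b m then w_ N D b i else 0) K (/ n * / n) (n * n)); [exact Hn1 | | | | |].
      - assert (0 < / n) by (apply Rinv_0_lt_compat; lra). apply Rmult_le_pos; lra.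
      - apply Rmult_le_pos; lra.
      - unfold K; lra.
      - intros a Ha. apply (bnd_mono _ _ _ (K1 * Tbv n (/ n * / n) a)). lra.
        apply Rmult_le_compat_r. apply Tbv_ge0; auto.
        assert (0 < / n) by (apply Rinv_0_lt_compat; lra). apply Rmult_le_pos; lra. unfold K; lra.
        apply (HB1 N eps D HN Hs a Ha).
      - intros b Hb. apply (bnd_mono _ _ _ (K2 * Tbv n (n * n) b)). lra.
        apply Rmult_le_compat_r. apply Tbv_ge0; auto. apply Rmult_le_pos; lra. unfold K; lra.
        apply (HB2 N eps D HN Hs b Hb). }
    assert (Hq0 : 0 < (L / n) * (L / n)).
    { assert (0 < L / n) by (unfold Rdiv; apply Rmult_lt_0_compat; auto; apply Rinv_0_lt_compat; lra). nra. }
    apply (bnd_ext _ _ (fun i => (- / ((L / n) * (L / n))) *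
       sum_f_R0 (fun a => bn m a * qq N D a i *
       (fun b i => if Nat.ltb b m then w_ N D b i else 0) (m - a)%nat i) m)).
    { intros i. pose proof (w_rel N eps D HN Hs m i ltac:(unfold m; lia)) as Hrel.
      rewrite (decomp_sum _ m) in Hrel by (unfold m; lia).
      rewrite (decomp_sum _ m) by (unfold m; lia).
      simpl pred in *. rewrite Nat.sub_0_r in *. rewrite Nat.ltb_irrefl.
      rewrite (qq_0 N eps D HN Hs) in *.
      replace (sum_f_R0 (fun i0 => bn m (S i0) * qq N D (S i0) i *
          (if Nat.ltb (m - S i0) m then w_ N D (m - S i0) i else 0)) m')
        with (sum_f_R0 (fun i0 => bn m (S i0) * qq N D (S i0) i * w_ N D (m - S i0) i) m').
      2:{ apply sum_ext. intros j Hj. destruct (Nat.ltb_spec (m - S j) m). auto. unfold m in *; lia. }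
      simpl bn in *. fold n in Hrel |- *.
      apply Rmult_eq_reg_l with ((L / n) * (L / n)). 2: lra.
      match goal with |- ?q * (- / ?q * ?X) = _ => replace (q * (- / q * X)) with (- X) by (field; lra) end.
      lra. }
    apply (bnd_mono _ _ _ (Rabs (- / (L / n * (L / n))) * (2 ^ m * 2 ^ P * K * K * Tbv n (/ n * / n * (n * n)) m))).
    lra. 2: apply bnd_scal; auto.
    rewrite Rabs_Ropp. rewrite Rabs_pos_eq by (left; apply Rinv_0_lt_compat; auto).
    right. unfold m, Tbv. field. split; lra.
Qed.
Lemma Tbv_shift : forall n b, 1 <= n -> Tbv n 1 (S b) <= Tbv n (sqrt n) b.
Proof.
  intros n b Hn. assert (Hs : 0 <= sqrt n) by apply sqrt_pos.
  destruct b.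
  - unfold Tbv. simpl. rewrite Rmult_1_r.
    apply Rle_trans with (sqrt n * 1 / 1). unfold Rdiv. apply Rmult_le_compat_l. lra.
    apply Rinv_le_contravar; lra. right; field.
  - unfold Tbv. right. simpl. field. lra.
Qed.

Lemma Tbv_SS : forall n m, 1 <= n -> Tbv n 1 (S (S m)) = sqrt n ^ m.
Proof.
  intros n m Hn. unfold Tbv. simpl.
  replace (sqrt n * (sqrt n * sqrt n ^ m) * 1 / n) with ((sqrt n * sqrt n) * sqrt n ^ m / n) by (field; lra).
  rewrite sqrt_sqrt by lra. field. lra.
Qed.

Lemma Ph_bound : forall M, ALLX M -> forall P a, (a <= M)%nat -> forall q,
  UB P (fun N D => ph N D q a) (fun n => Tbv n 1 a).
Proof.
  intros M HX P a. induction a as [a IH] using lt_wf_ind. intros Ha q.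
  destruct a as [|a'].
  - exists (sum_f_R0 (fun p => L ^ p * Mf (q + p)) P). split.
    { apply sum_nonneg. intros. apply Rmult_le_pos. apply pow_le; lra. apply Mf_ge0. }
    intros N eps D HN Hs. assert (0 < INR N) by (apply lt_0_INR; lia).
    apply (bnd_ext _ _ (fun i => (fun k => Fd (q + k)) 0%nat (INR i * (L / INR N)))).
    { intros i. rewrite (ph_0 N eps D HN Hs). rewrite Nat.add_0_r. auto. }
    simpl Tbv. rewrite Rmult_1_r.
    apply (bnd_grid P (fun k => Fd (q + k)) (fun k => Mf (q + k))); auto; try lra.
    + intros k x. rewrite Nat.add_succ_r. apply Fd_chain.
    + intros k x. apply Mf_spec.
  - destruct (Nat.eq_dec a' 0) as [E|E].
    + subst a'. exists 0. split. lra. intros N eps D HN Hs.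
      apply (bnd_ext _ _ (fun _ => 0)).
      { intros i. rewrite (ph_S N eps D HN Hs). simpl. rewrite (x_1 N eps D HN Hs). ring. }
      apply bnd_zero. apply lt_0_INR; lia. lra.
    + destruct (U_choice P a' (fun s N D => ph N D (S q) s) (fun _ => 1)) as [K1 [HK1 HB1]].
      { intros; lra. }
      { intros s Hs'. apply IH; lia. }
      destruct (U_choice P a' (fun b N D => xs N D (S b)) (fun n => sqrt n)) as [K2 [HK2 HB2]].
      { intros; apply sqrt_pos. }
      { intros b Hb. destruct (HX P (S b)) as [K [HK HB]]. lia. exists K. split; auto.
        intros N eps D HN Hs. apply (bnd_mono _ _ _ (K * Tbv (INR N) 1 (S b))).
        apply lt_0_INR; lia.
        apply Rmult_le_compat_l; auto. apply Tbv_shift. apply INR_ge1'; auto.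
        apply (HB N eps D HN Hs). }
      set (K := K1 + K2).
      exists (2 ^ a' * 2 ^ P * K * K). split.
      { repeat apply Rmult_le_pos; unfold K; try lra; apply pow_le; lra. }
      intros N eps D HN Hs.
      assert (Hn1 : 1 <= INR N) by (apply INR_ge1'; auto).
      apply (bnd_ext _ _ (fun i => sum_f_R0 (fun s => bn a' s * ph N D (S q) s i * xs N D (S (a' - s)) i) a')).
      { intros i. rewrite (ph_S N eps D HN Hs). auto. }
      apply (bnd_mono _ _ _ (2 ^ a' * 2 ^ P * K * K * Tbv (INR N) (1 * sqrt (INR N)) a')).
      lra.
      { right. destruct a'. lia. unfold Tbv. simpl. field. lra. }
      apply (leib_bnd (INR N) P a' (fun s => ph N D (S q) s) (fun b => xs N D (S b)) K 1 (sqrt (INR N)));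
        [exact Hn1 | lra | apply sqrt_pos | unfold K; lra | | ].
      * intros s Hs'. apply (bnd_mono _ _ _ (K1 * Tbv (INR N) 1 s)). lra.
        apply Rmult_le_compat_r. apply Tbv_ge0; auto; lra. unfold K; lra.
        apply (HB1 N eps D HN Hs s Hs').
      * intros b Hb. apply (bnd_mono _ _ _ (K2 * Tbv (INR N) (sqrt (INR N)) b)). lra.
        apply Rmult_le_compat_r. apply Tbv_ge0; auto. apply sqrt_pos. unfold K; lra.
        apply (HB2 N eps D HN Hs b Hb).
Qed.

Lemma X_step : forall M, ALLX M -> ALLX (S M).
Proof.
  intros M HX P m Hm.
  destruct (Nat.le_gt_cases m M) as [Hle|Hgt]. apply HX; lia.
  assert (m = S M) by lia. subst m.
  destruct M as [|m0].
  - exists 0. split. lra. intros N eps D HN Hs.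
    apply (bnd_ext _ _ (fun _ => 0)). intros; rewrite (x_1 N eps D HN Hs); auto.
    apply bnd_zero. apply lt_0_INR; lia. lra.
  - destruct (W_bound (S m0) HX (S P) m0) as [K1 [HK1 HB1]]. lia.
    destruct (Ph_bound (S m0) HX P m0 ltac:(lia) 0%nat) as [K2 [HK2 HB2]].
    exists (K1 + K2). split. lra.
    intros N eps D HN Hs.
    assert (Hn1 : 1 <= INR N) by (apply INR_ge1'; auto).
    assert (Hn0 : 0 < INR N) by lra.
    rewrite Tbv_SS by auto.
    assert (HsN : 0 <= sqrt (INR N) ^ m0) by (apply pow_le, sqrt_pos).
    destruct (Nat.eq_dec m0 0) as [E|E].
    + subst m0. apply (bnd_ext _ _ (fun i => ph N D 0 0 i)).
      { intros i. rewrite (x_eq N eps D HN Hs). rewrite !(w_0 N eps D HN Hs). ring. }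
      apply (bnd_mono _ _ _ (K2 * Tbv (INR N) 1 0)). lra.
      simpl. lra. apply (HB2 N eps D HN Hs).
    + apply (bnd_ext _ _ (fun i => -1 * dl (w_ N D m0) (i + (N - 1)) + ph N D 0 m0 i)).
      { intros i. rewrite (x_eq N eps D HN Hs). unfold dl.
        replace (S (i + (N - 1))) with (i + N)%nat by lia.
        rewrite w_per by lia. replace (i + (N - 1))%nat with (i + N - 1)%nat by lia. ring. }
      apply (bnd_mono _ _ _ (Rabs (-1) * (K1 * Tbv (INR N) (INR N * INR N) m0 / INR N) +
          K2 * Tbv (INR N) 1 m0)). lra.
      { assert (Ha1 : Rabs (-1) = 1) by (unfold Rabs; destruct (Rcase_abs (-1)); lra). rewrite Ha1. destruct m0. lia. unfold Tbv.
        set (s := sqrt (INR N) ^ S m0) in *.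
        apply Rle_trans with (K1 * s + K2 * (s / INR N)). right; field; lra.
        assert (s / INR N <= s).
        { unfold Rdiv. rewrite <- (Rmult_1_r s) at 2. apply Rmult_le_compat_l; auto.
          rewrite <- Rinv_1. apply Rinv_le_contravar; lra. }
        replace (K2 * (1 * s / INR N)) with (K2 * (s / INR N)) by (field; lra).
        nra. }
      apply bnd_plus.
      * apply bnd_scal. apply (bnd_shift _ _ (dl (w_ N D m0))).
        apply bnd_dl. apply (HB1 N eps D HN Hs).
      * apply (HB2 N eps D HN Hs).
Qed.

Lemma ALLX_all : forall M, ALLX M.
Proof.
  induction M. intros P m Hm; lia. apply X_step; auto.
Qed.

End Main.

Theorem theorem1 (L : R) (F : R -> R) (HL : 0 < L)
    (Hper : periodic L F) (Han : real_analytic F) :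
  forall j : nat, (1 <= j)%nat ->
  exists b : R,
    forall N : nat, (2 <= N)%nat ->
    forall (eps : R) (D : nat -> nat -> R -> R),
      is_solution N L F eps D ->
      forall i : nat, (i < N)%nat ->
        Rabs (coeff D i j) < b * Rpower (INR N) ((INR j - 1) / 2).
Proof.
  intros j Hj.
  destruct (ALLX_all L F HL Hper Han (S j) 0%nat (S j)) as [K [HK HB]]. lia.
  exists (K + 1). intros N HN eps D Hs i Hi.
  specialize (HB N eps D HN Hs). pose proof (bnd_abs _ _ _ _ HB i) as Hb.
  unfold xs in Hb. rewrite mod_small in Hb by auto.
  assert (Hn1 : 1 <= INR N) by (apply INR_ge1'; auto).
  destruct j as [|j']. lia.
  rewrite Tbv_SS in Hb by auto.
  assert (HR : Rpower (INR N) ((INR (S j') - 1) / 2) = sqrt (INR N) ^ j').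
  { rewrite S_INR. replace ((INR j' + 1 - 1) / 2) with (/ 2 * INR j') by field.
    rewrite <- Rpower_mult. rewrite Rpower_sqrt by lra. apply Rpower_pow.
    apply sqrt_lt_R0. lra. }
  rewrite HR.
  assert (Hpos : 0 < sqrt (INR N) ^ j') by (apply pow_lt, sqrt_lt_R0; lra).
  unfold coeff. unfold Rdiv. rewrite Rabs_mult.
  assert (Hf : 1 <= INR (fact (S j'))).
  { pose proof (lt_O_fact (S j')) as H. apply (le_INR 1) in H. rewrite INR_1 in H. lra. }
  rewrite (Rabs_pos_eq (/ INR (fact (S j')))) by (left; apply Rinv_0_lt_compat; lra).
  assert (/ INR (fact (S j')) <= 1).
  { rewrite <- Rinv_1. apply Rinv_le_contravar; lra. }
  pose proof (Rabs_pos (D (S (S j')) i 0)).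
  apply Rle_lt_trans with (Rabs (D (S (S j')) i 0)).
  { rewrite <- (Rmult_1_r (Rabs (D (S (S j')) i 0))) at 2. apply Rmult_le_compat_l; auto. }
  nra.
Qed.
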